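(* The Greedy Maximizer policy is a $2$-approximation policy; that is, for every system with minimum average reward requirements $[q^*_X : X\in S]$ such that the same system with requirements $[2q^*_X]$ is strictly feasible, the Greedy Maximizer fulfills the system with requirements $[q^*_X]$.
   Context: A system consists of a finite set $S$ of tasks. Time is slotted, $t\in\{0,1,2,\dots\}$. Each task $X\in S$ has a period $\tau_X$ (a positive integer); time is partitioned into consecutive periods of $X$ of $\tau_X$ slots each, the first starting at $t=0$, and in each period $X$ has one job, removed at the end of the period. Let $T=\mathrm{lcm}\{\tau_X : X\in S\}$; time is partitioned into consecutive frames of $T$ slots each, the $k$-th frame ($k=1,2,\dots$) being the $k$-th such block starting from $t=0$. A scheduling policy chooses in each slot either to idle or to execute the job of exactly one task. Each task $X$ has rewards $r^1_X\ge r^2_X\ge\dots\ge r^{\tau_X}_X\ge 0$: executing the job of $X$ for the $i$-th time within a period yields reward $r^i_X$ to $X$. Let $s_X(t)$ be the total reward obtained by $X$ between time 0 and $t$; the average reward is $q_X=\liminf_{t\to\infty}s_X(t)/(t/T)$. Each task has a minimum requirement $q^*_X>0$; a policy fulfills the system if $q_X\ge q^*_X$ with probability 1 for all $X\in S$. The system is feasible if some policy fulfills it, and strictly feasible if there is $\epsilon>0$ such that the same system with requirements $[(1+\epsilon)q^*_X]$ is feasible. For $p\ge1$, a $p$-approximation policy is one that fulfills every system with requirements $[q^*_X]$ such that the same system with requirements $[p\,q^*_X]$ is strictly feasible. Let $\tilde q_X(k)$ be the total reward obtained by $X$ during the $k$-th frame. The debt of $X$ is $d_X(0)=0$, $d_X(k)=[d_X(k-1)+q^*_X-\tilde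 q_X(k)]^+$ for $k>0$, with $[x]^+=\max\{x,0\}$. The Greedy Maximizer policy is the following: at the start of each frame the debts are updated by the recursion above (initially all debts are $0$); during the frame, in each time slot, letting $i_X$ denote the number of times the job of $X$ has already been executed in its current period (reset to $0$ at the start of each period of $X$), the policy executes the job of a task $Y\in S$ maximizing $r^{i_Y+1}_Y\,d_Y$ over $X\in S$ (using the current debts $d_X$), with ties broken arbitrarily. *)

(* Defs.v *)
From HB Require Import structures.
From mathcomp Require Import all_boot all_order all_algebra.
From mathcomp Require Import all_classical all_reals.
From mathcomp Require Import ereal sequences.
Set Implicit Arguments. Unset Strict Implicit. Unset Printing Implicit Defensive.
Import Order.TTheory GRing.Theory Num.Theory.
Local Open Scope ring_scope.

Section System.
Variables (R : realType) (S : finType).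
(* periods tau X (>0) and rewards r X i, i = 1..tau X *)
Variables (tau : S -> nat) (r : S -> nat -> R).

(* A schedule: in each slot t, idle (None) or execute the job of one task. *)
Definition schedule := nat -> option S.

Definition frameT : nat := \big[lcmn/1%N]_(X : S) tau X.

(* i_X(t): number of executions of X in its current period before slot t *)
Definition nexec (sc : schedule) (X : S) (t : nat) : nat :=
  #|[set u : 'I_t | (u %/ tau X == t %/ tau X)%N && (sc u == Some X)]|.

Definition slot_reward (sc : schedule) (X : S) (t : nat) : R :=
  if sc t == Some X then r X (nexec sc X t).+1 else 0.

Definition total_reward (sc : schedule) (X : S) (t : nat) : R :=
  \sum_(0 <= u < t) slot_reward sc X u.

Definition avg_reward (sc : schedule) (X : S) : \bar R :=
  limn_einf (fun t : nat => (total_reward sc X t / (t%:R / frameT%:R))%:E).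

Definition fulfills (q : S -> R) (sc : schedule) : Prop :=
  forall X, ((q X)%:E <= avg_reward sc X)%E.

Definition feasible (q : S -> R) : Prop := exists sc : schedule, fulfills q sc.

Definition strictly_feasible (q : S -> R) : Prop :=
  exists eps : R, 0 < eps /\ feasible (fun X => (1 + eps) * q X).

(* reward of X during the k-th frame (k >= 1): slots (k-1)T .. kT-1 *)
Definition frame_reward (sc : schedule) (X : S) (k : nat) : R :=
  \sum_(k.-1 * frameT <= u < k * frameT) slot_reward sc X u.

Fixpoint debt (q : S -> R) (sc : schedule) (X : S) (k : nat) : R :=
  match k with
  | 0 => 0
  | k'.+1 => Num.max (debt q sc X k' + q X - frame_reward sc X k) 0
  end.

(* sc is a run of the Greedy Maximizer (with some tie-breaking): in each slot t,
   lying in frame (t %/ T).+1, whose debts are d(t %/ T), it executes a task Y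
   maximizing r_Y^{i_Y+1} d_Y. *)
Definition greedy_maximizer (q : S -> R) (sc : schedule) : Prop :=
  forall t : nat, exists Y : S,
    sc t = Some Y /\
    forall X : S,
      r X (nexec sc X t).+1 * debt q sc X (t %/ frameT)
      <= r Y (nexec sc Y t).+1 * debt q sc Y (t %/ frameT).

End System.

(* Main.v *)
Require Import Defs.
From HB Require Import structures.
From mathcomp Require Import all_boot all_order all_algebra.
From mathcomp Require Import all_classical all_reals.
From mathcomp Require Import ereal sequences normedtype.
From mathcomp Require Import zify ring lra.
Import Order.TTheory GRing.Theory Num.Theory.
Local Open Scope ring_scope.

Lemma einf_lb (R : realType) (u : nat -> \bar R) (a : \bar R) (N : nat) :
  (forall n, (N <= n)%N -> (a <= u n)%E) -> (a <= limn_einf u)%E.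
Proof.
move=> H; rewrite limn_einf_lim; apply: lime_ge; first exact: is_cvg_einfs.
exists N => // m /= Nm; apply: le_ereal_inf_tmp => _ [k /= mk <-].
by apply: H; apply: leq_trans mk.
Qed.

Lemma einf_gt (R : realType) (u : nat -> \bar R) (a : \bar R) :
  (a < limn_einf u)%E -> exists N, forall n, (N <= n)%N -> (a < u n)%E.
Proof.
rewrite limn_einf_lim (cvg_lim _ (@cvg_einfs_sup _ u)) // => /ereal_sup_gt.
move=> [_ [m _ <-]] am; exists m => n mn; apply: (lt_le_trans am).
by apply: ereal_inf_lbound; exists n.
Qed.

Section N.
Variables (R : realType) (S : finType) (tau : S -> nat) (r : S -> nat -> R).

Lemma nexec_count sc X t : nexec tau sc X t =
  count (fun u => (u %/ tau X == t %/ tau X)%N && (sc u == Some X)) (iota 0 t).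
Proof.
rewrite /nexec cardsE -sum1_card -sum1_count.
have -> : iota 0 t = index_iota 0 t by rewrite /index_iota subn0.
by rewrite big_mkord; apply: eq_bigl.
Qed.

Lemma nexec0 sc X : nexec tau sc X 0 = 0%N.
Proof. by rewrite nexec_count. Qed.

Lemma nexecS sc X t : (0 < tau X)%N -> nexec tau sc X t.+1 =
  if (tau X %| t.+1)%N then 0%N else (nexec tau sc X t + (sc t == Some X))%N.
Proof.
move=> tp; rewrite !nexec_count -addn1 iotaD count_cat /= add0n addn0.
rewrite addn1 (divnS _ tp); case: ifP => d /=.
  rewrite add1n eqn_leq ltnn /= andbF addn0.
  rewrite (@eq_in_count _ _ pred0) ?count_pred0 // => u.
  rewrite mem_iota add0n => /andP[_ ut] /=.
  by rewrite eqn_leq ltnNge leq_div2r ?andbF // ltnW.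
by rewrite !add0n eqxx.
Qed.

Lemma nexec_le sc X t : (0 < tau X)%N -> (nexec tau sc X t <= t %% tau X)%N.
Proof.
move=> tp; elim: t => [|t IH]; first by rewrite nexec0.
rewrite nexecS //; case: ifP => d //.
rewrite modnS d -addn1; apply: leq_add => //; by case: (sc t == Some X).
Qed.

Lemma nexec_lt sc X t : (0 < tau X)%N -> (nexec tau sc X t < tau X)%N.
Proof. by move=> tp; apply: (leq_ltn_trans (nexec_le sc X t tp)); rewrite ltn_mod. Qed.

Lemma nexec_mul sc X m : (0 < tau X)%N -> (tau X %| m)%N -> nexec tau sc X m = 0%N.
Proof.
move=> tp d; have := nexec_le sc X m tp; rewrite (eqP d) leqn0 => /eqP //.
Qed.


Hypothesis tp : forall X, (0 < tau X)%N.
Hypothesis rnn : forall X i, (1 <= i <= tau X)%N -> 0 <= r X i.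
Hypothesis rmon : forall X i j, (1 <= i)%N -> (i <= j)%N -> (j <= tau X)%N -> r X j <= r X i.

Definition Ssum X n := \sum_(j < n) r X j.+1.
Definition Phi X a b := Ssum X a - Ssum X (minn a b).

Lemma SsumS X n : Ssum X n.+1 = Ssum X n + r X n.+1.
Proof. by rewrite /Ssum big_ord_recr. Qed.

Lemma Ssum_mono X n m : (n <= m)%N -> (m <= tau X)%N -> Ssum X n <= Ssum X m.
Proof.
move=> nm; elim: m nm => [|m IH]; first by rewrite leqn0 => /eqP ->.
rewrite leq_eqVlt => /orP[/eqP -> //| ]; rewrite ltnS => nm mt.
rewrite SsumS; apply: (le_trans (IH nm (ltnW mt))); rewrite lerDl.
by apply: rnn; rewrite mt.
Qed.

Lemma Phi_ge0 X a b : (a <= tau X)%N -> 0 <= Phi X a b.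
Proof. by move=> at_; rewrite subr_ge0; apply: Ssum_mono => //; rewrite geq_minl. Qed.

Lemma step_X X a b (eg eo : bool) : (a < tau X)%N -> (b < tau X)%N ->
  (if eo then r X b.+1 else 0) + Phi X (a + eg) (b + eo) - Phi X a b
    - (if eg then r X a.+1 else 0) <= (if eo then r X a.+1 else 0).
Proof.
move=> at_ bt.
have ra : 0 <= r X a.+1 by apply: rnn.
have rb : 0 <= r X b.+1 by apply: rnn.
have rab : (a <= b)%N -> r X b.+1 <= r X a.+1 by move=> ab; apply: rmon.
rewrite /Phi; case: eg; case: eo; rewrite ?addn1 ?addn0.
- have -> : minn a.+1 b.+1 = (minn a b).+1 by lia.
  rewrite !SsumS; case: (leqP a b) => ab.
    try (have -> : minn a b = a by lia).
    by have := rab ab; lra.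
  try (have -> : minn a b = b by lia).
  lra.
- case: (leqP b a) => ab.
    have -> : minn a.+1 b = b by lia.
    rewrite !SsumS; lra.
  have -> : minn a.+1 b = a.+1 by lia.
  rewrite !SsumS; lra.
- case: (leqP a b) => ab.
    have -> : minn a b.+1 = a by lia.
    by have := rab ab; lra.
  have -> : minn a b.+1 = b.+1 by lia.
  rewrite !SsumS; lra.
- lra.
Qed.


Lemma sum_if_some (s : option S) (d f : S -> R) :
  \sum_X d X * (if s == Some X then f X else 0) = (if s is Some Y then d Y * f Y else 0).
Proof.
case: s => [Y|]; last by rewrite big1 // => X _; rewrite mulr0.
rewrite (bigD1 Y) //= eqxx big1 ?addr0 // => X XY.
case: eqP => [[E]|_]; last by rewrite mulr0.
by rewrite E eqxx in XY.
Qed.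

Lemma frame_cmp (g o : schedule S) (d : S -> R) (mg mo N : nat) :
  (forall X, 0 <= d X) -> (forall X, (tau X %| mg)%N) -> (forall X, (tau X %| mo)%N) ->
  (forall u, (u < N)%N -> exists Y, g (mg+u)%N = Some Y /\
     forall X, r X (nexec tau g X (mg+u)).+1 * d X <= r Y (nexec tau g Y (mg+u)).+1 * d Y) ->
  \sum_X d X * (\sum_(u < N) slot_reward tau r o X (mo+u)%N)
    <= 2 * \sum_X d X * (\sum_(u < N) slot_reward tau r g X (mg+u)%N).
Proof.
move=> d0 dg dvo gr.
pose a X w := nexec tau g X (mg+w).
pose b X w := nexec tau o X (mo+w).
pose O X w := \sum_(u < w) slot_reward tau r o X (mo+u)%N.
pose Gr X w := \sum_(u < w) slot_reward tau r g X (mg+u)%N.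
have inv : forall w, (w <= N)%N ->
  \sum_X d X * (O X w + Phi X (a X w) (b X w)) <= 2 * \sum_X d X * Gr X w.
  elim=> [|w IH] wN.
    rewrite big1; first by rewrite big1 ?mulr0 // => X _; rewrite /Gr big_ord0 mulr0.
    move=> X _; rewrite /O /a /b !addn0 big_ord0 !nexec_mul // /Phi /Ssum.
    by rewrite big_ord0 subr0 add0r mulr0.
  have wN' : (w < N)%N by [].
  have [Y [gY gYm]] := gr w wN'.
  pose ind X := if o (mo + w)%N == Some X then r X (a X w).+1 else 0.
  have pX : forall X, O X w.+1 + Phi X (a X w.+1) (b X w.+1) <=
      (O X w + Phi X (a X w) (b X w)) + slot_reward tau r g X (mg + w)%N + ind X.
    move=> X; rewrite /O big_ord_recr /=.
    have aw : (a X w < tau X)%N by apply: nexec_lt.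
    have bw : (b X w < tau X)%N by apply: nexec_lt.
    have := @step_X X (a X w) (b X w) (g (mg+w)%N == Some X) (o (mo+w)%N == Some X) aw bw.
    have Pb : Phi X (a X w.+1) (b X w.+1) <=
        Phi X (a X w + (g (mg+w)%N == Some X)) (b X w + (o (mo+w)%N == Some X)).
      rewrite /a /b !addnS !nexecS //.
      have -> : (tau X %| (mo + w).+1)%N = (tau X %| (mg + w).+1)%N.
        by rewrite -!addnS !dvdn_addr.
      case: ifP => _; last by [].
      have -> : Phi X 0 0 = 0 by rewrite /Phi subrr.
      apply: Phi_ge0; move: aw; rewrite /a; case: (g _ == _) => /=; lia.
    move: Pb; rewrite /slot_reward /ind -/(a X w) -/(b X w).
    case: (g (mg + w)%N == Some X); case: (o (mo + w)%N == Some X) => /=; lra.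
  have Gw : \sum_X d X * slot_reward tau r g X (mg+w)%N = d Y * r Y (a Y w).+1.
    by rewrite /slot_reward sum_if_some gY.
  have indw : \sum_X d X * ind X <= d Y * r Y (a Y w).+1.
    rewrite /ind sum_if_some; case: (o (mo + w)%N) => [Z|].
      by rewrite mulrC (mulrC (d Y)); apply: gYm.
    rewrite -Gw; apply: sumr_ge0 => X _; apply: mulr_ge0 => //.
    rewrite /slot_reward; case: ifP => // _; apply: rnn.
    by rewrite ltnS; apply: nexec_lt.
  apply: (le_trans (y := \sum_X d X * ((O X w + Phi X (a X w) (b X w))
       + slot_reward tau r g X (mg + w)%N + ind X))).
    by apply: ler_sum => X _; apply: ler_wpM2l.
  rewrite (eq_bigr (fun X => d X * (O X w + Phi X (a X w) (b X w)) +
     d X * slot_reward tau r g X (mg + w)%N + d X * ind X)); last first.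
    by move=> X _; rewrite !mulrDr.
  rewrite !big_split /=.
  have := IH (ltnW wN).
  have -> : \sum_X d X * Gr X w.+1 = \sum_X d X * Gr X w + \sum_X d X * slot_reward tau r g X (mg+w)%N.
    by rewrite -big_split /=; apply: eq_bigr => X _; rewrite /Gr big_ord_recr /= mulrDr.
  move: Gw indw. set A := \sum_X _ * slot_reward _ _ _ _ _. set B := \sum_X _ * ind _. lra.
apply: (le_trans _ (inv N (leqnn N))).
apply: ler_sum => X _; apply: ler_wpM2l => //; rewrite /O lerDl.
by apply: Phi_ge0; apply: ltnW; apply: nexec_lt.
Qed.

Lemma T_pos : (0 < frameT tau)%N.
Proof.
rewrite /frameT; apply: (big_ind (fun n => 0 < n)%N) => // m n.
by rewrite lcmn_gt0 => -> ->.
Qed.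

Lemma tau_dvdT X : (tau X %| frameT tau)%N.
Proof. by rewrite /frameT; apply: (@biglcmn_sup _ X xpredT tau (tau X) isT (dvdnn _)). Qed.

Lemma sr_ge0 sc X t : 0 <= slot_reward tau r sc X t.
Proof.
rewrite /slot_reward; case: ifP => // _; apply: rnn.
by rewrite ltnS; apply: nexec_lt.
Qed.

Definition Mx X := Ssum X (tau X).

Lemma Ssum0 X : Ssum X 0 = 0.
Proof. by rewrite /Ssum big_ord0. Qed.

Lemma sr_le sc X t : slot_reward tau r sc X t <= Mx X.
Proof.
rewrite /slot_reward; case: ifP => _; last first.
  by rewrite /Mx -(Ssum0 X); apply: Ssum_mono.
have lt := nexec_lt sc X t (tp X).
rewrite /Mx; apply: (le_trans _ (@Ssum_mono X _ _ lt (leqnn (tau X)))).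
rewrite SsumS lerDr -(Ssum0 X); apply: Ssum_mono => //; exact: ltnW.
Qed.

Lemma frame_shift sc X k : frame_reward tau r sc X k.+1 =
  \sum_(u < frameT tau) slot_reward tau r sc X (k * frameT tau + u)%N.
Proof.
rewrite /frame_reward /= -{1}(add0n (k * frameT tau)%N) big_addn mulSn (addnC (frameT tau)) addKn.
by rewrite big_mkord; apply: eq_bigr => u _; rewrite addnC.
Qed.

Lemma total_frames sc X K : total_reward tau r sc X (K * frameT tau)%N =
  \sum_(k < K) frame_reward tau r sc X k.+1.
Proof.
elim: K => [|K IH]; first by rewrite mul0n /total_reward big_ord0 big_geq.
rewrite big_ord_recr /= -IH /total_reward /frame_reward /=.
by rewrite (big_cat_nat (n := (K * frameT tau)%N)) //= leq_mul2r leqnSn orbT.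
Qed.

Lemma fr_ge0 sc X k : 0 <= frame_reward tau r sc X k.
Proof. by apply: sumr_ge0 => u _; apply: sr_ge0. Qed.

Lemma fr_le sc X k : frame_reward tau r sc X k.+1 <= (frameT tau)%:R * Mx X.
Proof.
rewrite frame_shift; apply: (le_trans (ler_sum _ (fun u _ => sr_le sc X _))).
by rewrite sumr_const card_ord mulr_natl.
Qed.

Lemma total_mono sc X t1 t2 : (t1 <= t2)%N ->
  total_reward tau r sc X t1 <= total_reward tau r sc X t2.
Proof.
move=> le; rewrite /total_reward (big_cat_nat (n := t1) (m := 0) (p := t2)) //=.
by rewrite lerDl; apply: sumr_ge0 => u _; apply: sr_ge0.
Qed.

Lemma debt_ge0 q sc X K : 0 <= debt tau r q sc X K.
Proof. by case: K => //= K; rewrite le_max lexx orbT. Qed.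

Lemma sq_max (x : R) : Num.max x 0 ^+ 2 <= x ^+ 2.
Proof.
by case: (leP x 0) => h; rewrite ?expr0n /= ?sqr_ge0.
Qed.

Lemma term_le (i : S) (F : S -> R) : (forall j, 0 <= F j) ->
  F i <= \sum_j F j.
Proof.
move=> F0; rewrite (bigD1 i) //= lerDl; exact: sumr_ge0.
Qed.

Lemma main q : (forall X, 0 < q X) -> strictly_feasible tau r (fun X => 2 * q X) ->
  forall sc, greedy_maximizer tau r q sc -> fulfills tau r q sc.
Proof.
move=> qp [eps [eps0 [sc' fsc']]] sc gm.
set T := frameT tau.
have Tp : (0 < T)%N := T_pos.
have TR : (0 : R) < T%:R by rewrite ltr0n.
have feas : forall d : S -> R, (forall X, 0 <= d X) -> exists j,
    (2 + eps) * \sum_X d X * q X <= \sum_X d X * frame_reward tau r sc' X j.+1.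
  move=> dd dd0.
  have hN : forall X, exists N, forall n, (N <= n)%N -> (((2 + eps) * q X)%:E <
      (total_reward tau r sc' X n / (n%:R / T%:R))%:E)%E.
    move=> X; apply: einf_gt; apply: (lt_le_trans _ (fsc' X)); rewrite lte_fin.
    by have := qp X; nra.
  pose Nf X := proj1_sig (cid (hN X)).
  have HNf : forall X n, (Nf X <= n)%N -> ((2 + eps) * q X) <
      total_reward tau r sc' X n / (n%:R / T%:R).
    by move=> X n; rewrite /Nf; case: (cid (hN X)) => /= N HN /HN; rewrite lte_fin.
  pose N0 := (\max_X Nf X)%N.
  pose V (k : nat) := \sum_X dd X * frame_reward tau r sc' X k.+1.
  have hK : forall X, (2 + eps) * q X * N0.+1%:R <= total_reward tau r sc' X (N0.+1 * T)%N.
    move=> X.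
    have := HNf X (N0.+1 * T)%N.
    have -> : (N0.+1 * T)%:R / T%:R = N0.+1%:R :> R.
      by rewrite natrM mulfK // gt_eqF.
    rewrite ltr_pdivlMr ?ltr0n // => H; apply/ltW/H.
    apply: (leq_trans (leq_bigmax X)); apply: (leq_trans (leqnSn _)).
    by rewrite leq_pmulr.
  have sumK : N0.+1%:R * ((2 + eps) * \sum_X dd X * q X) <= \sum_(k < N0.+1) V k.
    rewrite /V exchange_big /=.
    apply: (le_trans (y := \sum_X dd X * ((2 + eps) * q X * N0.+1%:R))).
      by rewrite !mulr_sumr; apply: ler_sum => X _; rewrite le_eqVlt; apply/orP; left; apply/eqP; ring.
    apply: ler_sum => X _; rewrite -mulr_sumr; apply: ler_wpM2l => //.
    by rewrite -total_frames.
  case: (pselect (exists j, (2 + eps) * \sum_X dd X * q X <= V j)) => [//|nj].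
  exfalso; move: sumK; apply/negP; rewrite -ltNge.
  have lt : forall j, V j < (2 + eps) * \sum_X dd X * q X.
    by move=> j; rewrite ltNge; apply/negP => h; apply: nj; exists j.
  rewrite big_ord_recr /=.
  have : \sum_(i < N0) V i <= \sum_(i < N0) ((2 + eps) * \sum_X dd X * q X).
    by apply: ler_sum => i _; apply/ltW/lt.
  rewrite sumr_const card_ord mulr_natl -natr1.
  by have := lt N0; lra.
pose d K X := debt tau r q sc X K.
have d0 : forall K X, 0 <= d K X by move=> K X; apply: debt_ge0.
have gstep : forall K, (2 + eps) * \sum_X d K X * q X <=
    2 * \sum_X d K X * frame_reward tau r sc X K.+1.
  move=> K; have [j Hj] := feas (d K) (d0 K).
  apply: (le_trans Hj).
  under eq_bigr do rewrite frame_shift.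
  under [in X in _ <= X]eq_bigr do rewrite frame_shift.
  apply: frame_cmp => //.
  - by move=> X; apply: dvdn_mull; apply: tau_dvdT.
  - by move=> X; apply: dvdn_mull; apply: tau_dvdT.
  move=> u uT; have [Y [h1 h2]] := gm (K * T + u)%N.
  exists Y; split => // X.
  have := h2 X; rewrite /d divnMDl // divn_small // addn0.
  by rewrite mulrC (mulrC (r Y _)).
pose L K := \sum_X d K X ^+ 2.
pose C := \sum_X (q X ^+ 2 + (T%:R * Mx X) ^+ 2).
have C0 : 0 <= C by apply: sumr_ge0 => X _; apply: addr_ge0; apply: sqr_ge0.
have lyap : forall K, L K.+1 <= L K - eps * \sum_X d K X * q X + C.
  move=> K.
  have pX : forall X, d K.+1 X ^+ 2 + 2 * (d K X * frame_reward tau r sc X K.+1) <=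
      d K X ^+ 2 + 2 * (d K X * q X) + (q X ^+ 2 + (T%:R * Mx X) ^+ 2).
    move=> X.
    have f0 := fr_ge0 sc X K.+1.
    have f1 := fr_le sc X K.
    have dd0 := d0 K X.
    have qX := qp X.
    have e : d K.+1 X = Num.max (d K X + q X - frame_reward tau r sc X K.+1) 0 by [].
    have := sq_max (d K X + q X - frame_reward tau r sc X K.+1).
    rewrite -e.
    have : frame_reward tau r sc X K.+1 ^+ 2 <= (T%:R * Mx X) ^+ 2.
      by rewrite ler_pXn2r // ?nnegrE //; apply: le_trans f1.
    rewrite !expr2 => h1 h2; nra.
  have : \sum_X (d K.+1 X ^+ 2 + 2 * (d K X * frame_reward tau r sc X K.+1)) <=
      \sum_X (d K X ^+ 2 + 2 * (d K X * q X) + (q X ^+ 2 + (T%:R * Mx X) ^+ 2)).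
    by apply: ler_sum => X _; exact: pX.
  rewrite !big_split /= -!mulr_sumr -/(L K) -/(L K.+1) -/C.
  have := gstep K; rewrite /C big_split /=; lra.
pose Lb := \sum_X (C / (eps * q X)) ^+ 2 + C.
have Lbd : forall K, L K <= Lb.
  have Lb0 : 0 <= \sum_X (C / (eps * q X)) ^+ 2 by apply: sumr_ge0 => X _; apply: sqr_ge0.
  have dq0 : forall K, 0 <= \sum_X d K X * q X.
    by move=> K; apply: sumr_ge0 => X _; apply: mulr_ge0 => //; apply/ltW.
  elim=> [|K IH].
    rewrite /L big1 /Lb; first lra.
    by move=> X _; rewrite /d /= expr0n.
  have := lyap K; have := dq0 K.
  case: (leP C (eps * \sum_X d K X * q X)) => hc.
    rewrite /Lb in IH *; lra.
  have LK : L K <= \sum_X (C / (eps * q X)) ^+ 2.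
    apply: ler_sum => X _.
    have qX := qp X.
    have h : d K X <= C / (eps * q X).
      rewrite ler_pdivlMr ?mulr_gt0 //.
      have := term_le X (fun Y => d K Y * q Y) (fun Y => mulr_ge0 (d0 K Y) (ltW (qp Y))).
      move: hc; nra.
    by rewrite ler_pXn2r // nnegrE // (le_trans (d0 K X) h).
  move=> h0 h1; have := mulr_ge0 (ltW eps0) h0; rewrite /Lb; lra.
pose Db := Lb + 1.
have dbd : forall K X, d K X <= Db.
  move=> K X.
  have h1 := term_le X (fun Y => d K Y ^+ 2) (fun Y => sqr_ge0 (d K Y)).
  have h2 := Lbd K.
  rewrite /Db; move: h1 h2; rewrite -/(L K) expr2; nra.
have tot : forall K X, K%:R * q X - d K X <= total_reward tau r sc X (K * T)%N.
  move=> K X; elim: K => [|K IH].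
    by rewrite mul0n /total_reward big_geq // /d /= mul0r subrr.
  rewrite total_frames big_ord_recr /= -total_frames.
  have : d K X + q X - frame_reward tau r sc X K.+1 <= d K.+1 X.
    by rewrite /d /= le_max lexx.
  rewrite -natr1; move: IH; lra.
move=> X; rewrite /avg_reward; apply/lee_subgt0Pr => del del0.
rewrite -EFinB.
have qX := qp X.
have Db0 : 0 <= Db by have := dbd 0%N X; rewrite /d /=.
have hb : 0 <= (q X + Db) / del by apply: divr_ge0 => //; [lra | apply: ltW].
set n0 := Num.Def.archi_bound ((q X + Db) / del).
have hn0 := archi_boundP hb; rewrite -/n0 in hn0.
apply: (@einf_lb _ _ _ (n0.+1 * T)%N) => n Nn.
rewrite lee_fin.
set K := (n %/ T)%N.
have K1 : (n0.+1 <= K)%N.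
  by have := leq_div2r T Nn; rewrite mulnK.
have nlt : (n < K.+1 * T)%N by apply: ltn_ceil.
have KTn : (K * T <= n)%N by apply: leq_trunc_div.
have npos : (0 < n)%N.
  by apply: (leq_trans _ Nn); rewrite muln_gt0.
have nR : (0 : R) < n%:R by rewrite ltr0n.
have z0 : (0 : R) < n%:R / T%:R by apply: divr_gt0.
have zK : (n%:R / T%:R : R) <= K%:R + 1.
  by rewrite ler_pdivrMr // natr1 -natrM ler_nat; apply: ltnW.
have Kd : (q X + Db) < K%:R * del.
  rewrite -ltr_pdivrMr //; apply: (lt_le_trans hn0); rewrite ler_nat.
  exact: ltnW.
have tt := tot K X.
have dK := dbd K X.
have mono := @total_mono sc X _ _ KTn.
have tot0 : 0 <= total_reward tau r sc X n.
  by apply: sumr_ge0 => u _; apply: sr_ge0.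
rewrite ler_pdivlMr //.
case: (leP (q X - del) 0) => h.
  apply: (le_trans _ tot0); rewrite -/T; apply: mulr_le0_ge0 => //; exact: ltW.
nra.
Qed.

End N.

Theorem theorem9 (R : realType) (S : finType) (tau : S -> nat)
  (r : S -> nat -> R) (q : S -> R) :
  (forall X, (0 < tau X)%N) ->
  (forall X i, (1 <= i <= tau X)%N -> 0 <= r X i) ->
  (forall X i j, (1 <= i)%N -> (i <= j)%N -> (j <= tau X)%N -> r X j <= r X i) ->
  (forall X, 0 < q X) ->
  strictly_feasible tau r (fun X => 2 * q X) ->
  forall sc : schedule S,
    greedy_maximizer tau r q sc -> fulfills tau r q sc.
Proof.
move=> tp rnn rmon qp sf sc gm.
exact: (@main R S tau r tp rnn rmon q qp sf sc gm).
Qed.
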